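(* Let $m,k,n\ge1$ be integers; let $\lambda_i,\mu_i>0$ ($i\le k$), $\alpha_j,\beta_j,u_j,v_j>0$ ($j\le n$); let $\theta:\{0,\dots,m\}\to\mathbb{R}$ satisfy $0\le\theta\le1$, $\theta(b)>0$ for $b<m$, $\theta(m)=0$. Consider the CTMC on the set $\mathcal{S}$ of vectors $(x_1,\dots,x_k;a_1,\dots,a_n)$, $x_i\in\mathbb{Z}_{\ge0}$, $a_j\in\{I,W,T\}$, with $\mathrm{busy}(w)=\sum_i x_i+\sum_j1_{\{a_j=T\}}\le m$, whose only nonzero rates are: $x\to x+e_i$ at rate $\lambda_i\theta(\mathrm{busy}(w))$ and $x+e_i\to x$ at rate $(x_i+1)\mu_i$; and, for each $j$ changing only $a_j$: $I\to W$ at rate $\alpha_j$, $W\to I$ at rate $\beta_j$, $W\to T$ at rate $u_j\theta(\mathrm{busy}(w))$ ($w$ the current state), $T\to W$ at rate $v_j$. Its steady state distribution is $p(w)=B\big(\prod_{r=0}^{\mathrm{busy}(w)-1}\theta(r)\big)\big(\prod_{i}\rho_i^{x_i}/x_i!\big)\prod_j(\alpha_j/\beta_j)^{1_{\{a_j=W\}}}(\alpha_ju_j/(\beta_jv_j))^{1_{\{a_j=T\}}}$ with normalizing constant $B$, where $\rho_i=\lambda_i/\mu_i$. For $a=(a_1,\dots,a_n)$ let $\mathrm{busy}_p(a)=\sum_{j=1}^n1_{\{a_j=T\}}$, and call $(x,a)$ with $x\in\mathbb{Z}_{\ge0}$ legitimate if $x+\mathrm{busy}_p(a)\le m$. Let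 $q(x;a_1,\dots,a_n)$ be the steady state probability that $\sum_{i=1}^kx_i=x$ and the persistent user states are $(a_1,\dots,a_n)$. Then for every legitimate $(x,a)$, $$q(x;a_1,\dots,a_n)=B\cdot\Big(\prod_{r=0}^{x+\mathrm{busy}_p(a)-1}\theta(r)\Big)\prod_{j=1}^n\Big(\frac{\alpha_j}{\beta_j}\Big)^{1_{\{a_j=W\}}}\Big(\frac{\alpha_ju_j}{\beta_jv_j}\Big)^{1_{\{a_j=T\}}}\frac{\rho^x}{x!},$$ with $\rho=\sum_{i=1}^k\rho_i$. Further, in the special case with no non-persistent users (the analogous CTMC on persistent states $a$ alone, i.e. $\rho\to0$), the steady state probability of $(a_1,\dots,a_n)$ is $$q(a_1,\dots,a_n)=B\cdot\Big(\prod_{r=0}^{\mathrm{busy}_p(a)-1}\theta(r)\Big)\prod_{j=1}^n\Big(\frac{\alpha_j}{\beta_j}\Big)^{1_{\{a_j=W\}}}\Big(\frac{\alpha_ju_j}{\beta_jv_j}\Big)^{1_{\{a_j=T\}}},$$ with $B$ the corresponding normalizing constant.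
   Context: Multi-channel access model with $m$ channels, $k$ classes of non-persistent users and $n$ persistent users with activity states Idle ($I$), Waiting ($W$), Transmitting ($T$). Empty products $\prod_{r=0}^{-1}\theta(r)$ equal $1$. *)

(* Defs.v *)
From HB Require Import structures.
From mathcomp Require Import all_boot all_order all_algebra.
From mathcomp Require Import reals.
Import Order.TTheory GRing.Theory Num.Theory.
Local Open Scope ring_scope.

Inductive act := Idle | Wait | Trans.

Definition act_to_ord (s : act) : 'I_3 :=
  match s with Idle => @Ordinal 3 0 isT | Wait => @Ordinal 3 1 isT | Trans => @Ordinal 3 2 isT end.
Definition ord_to_act (o : 'I_3) : act :=
  match val o with 0 => Idle | 1 => Wait | _ => Trans end.
Lemma act_to_ordK : cancel act_to_ord ord_to_act. Proof. by case. Qed.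
HB.instance Definition _ := Finite.copy act (can_type act_to_ordK).

Section Model.
Variable R : realType.
Variables (m k n : nat).
Variables (lam mu : 'I_k -> R) (alpha beta u v : 'I_n -> R) (theta : nat -> R).

(* Full states: (x_1..x_k ; a_1..a_n).  Each x_i is stored in 'I_(m+1); this is
   no restriction since a legitimate state has busy <= m, hence x_i <= m. *)
Definition state := ({ffun 'I_k -> 'I_m.+1} * {ffun 'I_n -> act})%type.

Definition busy_p (a : {ffun 'I_n -> act}) : nat := (\sum_(j < n) (a j == Trans))%N.
Definition nsum (x : {ffun 'I_k -> 'I_m.+1}) : nat := (\sum_(i < k) val (x i))%N.
Definition busy (w : state) : nat := (nsum w.1 + busy_p w.2)%N.
Definition valid (w : state) : bool := (busy w <= m)%N.

Definition trans_rate (j : 'I_n) (s t : act) (b : nat) : R :=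
  match s, t with
  | Idle, Wait => alpha j
  | Wait, Idle => beta j
  | Wait, Trans => u j * theta b
  | Trans, Wait => v j
  | _, _ => 0
  end.

Definition rate (w w' : state) : R :=
  \sum_(i < k)
     ( (([forall l, val (w'.1 l) == (val (w.1 l) + (l == i))%N] && (w'.2 == w.2)) %:R
          * (lam i * theta (busy w)))        (* x -> x + e_i *)
     + (([forall l, val (w.1 l) == (val (w'.1 l) + (l == i))%N] && (w'.2 == w.2)) %:R
          * ((val (w.1 i))%:R * mu i)) )     (* x'+e_i -> x' at rate (x'_i+1) mu_i *)
  + \sum_(j < n)
      (((w'.1 == w.1) && [forall l, (l != j) ==> (w'.2 l == w.2 l)]) %:R
         * trans_rate j (w.2 j) (w'.2 j) (busy w)).

Definition stationary (pi : state -> R) : Prop :=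
  [/\ forall w, 0 <= pi w,
      forall w, ~~ valid w -> pi w = 0,
      \sum_(w | valid w) pi w = 1
    & forall w, valid w ->
        \sum_(w' | valid w') pi w' * rate w' w = pi w * \sum_(w' | valid w') rate w w'].

Definition theta_prod (b : nat) : R := \prod_(r < b) theta r.

Definition pers_weight (a : {ffun 'I_n -> act}) : R :=
  \prod_(j < n) ((alpha j / beta j) ^+ (a j == Wait)
                 * (alpha j * u j / (beta j * v j)) ^+ (a j == Trans)).

Definition rho (i : 'I_k) : R := lam i / mu i.
Definition rho_sum : R := \sum_(i < k) rho i.

Definition weight (w : state) : R :=
  theta_prod (busy w)
  * (\prod_(i < k) (rho i ^+ val (w.1 i) / ((val (w.1 i))`!)%:R))
  * pers_weight w.2.

Definition normB : R := (\sum_(w | valid w) weight w)^-1.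

Definition marginal (pi : state -> R) (x : nat) (a : {ffun 'I_n -> act}) : R :=
  \sum_(w | valid w && (nsum w.1 == x) && (w.2 == a)) pi w.

Definition pstate := {ffun 'I_n -> act}.
Definition pvalid (a : pstate) : bool := (busy_p a <= m)%N.
Definition prate (a a' : pstate) : R :=
  \sum_(j < n) ([forall l, (l != j) ==> (a' l == a l)]%:R
                 * trans_rate j (a j) (a' j) (busy_p a)).
Definition pstationary (pi : pstate -> R) : Prop :=
  [/\ forall a, 0 <= pi a,
      forall a, ~~ pvalid a -> pi a = 0,
      \sum_(a | pvalid a) pi a = 1
    & forall a, pvalid a ->
        \sum_(a' | pvalid a') pi a' * prate a' a = pi a * \sum_(a' | pvalid a') prate a a'].
Definition pweight (a : pstate) : R := theta_prod (busy_p a) * pers_weight a.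
Definition pnormB : R := (\sum_(a | pvalid a) pweight a)^-1.

End Model.

Arguments busy_p {n}.

(* Main.v *)
Require Import Defs.
From HB Require Import structures.
From mathcomp Require Import all_boot all_order all_algebra.
From mathcomp Require Import reals.
From mathcomp Require Import ring lra zify.
Import Order.TTheory GRing.Theory Num.Theory.
Local Open Scope ring_scope.

Section Uniq.
Variable R : realType.

Lemma stat_unique (S : finType) (valid : pred S) (q : S -> S -> R) (wt : S -> R)
  (pot : S -> nat) (o : S) (pi : S -> R) :
 valid o ->
 (forall s t, valid s -> valid t -> 0 <= q s t) ->
 (forall s, valid s -> 0 < wt s) ->
 (forall s t, valid s -> valid t -> wt s * q s t = wt t * q t s) ->
 (forall s, valid s -> s != o -> exists t, [/\ valid t, (pot t < pot s)%N & 0 < q s t]) ->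
 \sum_(s | valid s) pi s = 1 ->
 (forall s, valid s -> \sum_(t | valid t) pi t * q t s = pi s * \sum_(t | valid t) q s t) ->
 forall s, valid s -> pi s = (\sum_(t | valid t) wt t)^-1 * wt s.
Proof.
move=> Vo q0 wt0 DB down Hsum bal.
pose h s := pi s / wt s.
have piE t : valid t -> pi t = h t * wt t.
  by move=> Vt; rewrite /h divfK // gt_eqF ?wt0.
have harm s : valid s -> \sum_(t | valid t) q s t * (h t - h s) = 0.
  move=> Vs.
  have := bal s Vs.
  rewrite (eq_bigr (fun t => wt s * (h t * q s t))); last first.
    by move=> t Vt; rewrite piE // -mulrA DB // mulrCA.
  rewrite -mulr_sumr (piE s Vs) => E.
  have : wt s * (\sum_(t | valid t) q s t * (h t - h s)) = 0.
    rewrite (eq_bigr (fun t => h t * q s t - h s * q s t)); last first.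
      by move=> t _; rewrite mulrBr mulrC [q s t * _]mulrC.
    by rewrite sumrB -mulr_sumr mulrBr E; rewrite -mulrA mulrCA subrr.
  by move/eqP; rewrite mulf_eq0 gt_eqF ?wt0 //= => /eqP.
have closure s : valid s -> (forall t, valid t -> h t <= h s) ->
    forall t, valid t -> 0 < q s t -> h t = h s.
  move=> Vs Hm t Vt qp.
  have H0 : \sum_(t | valid t) (- (q s t * (h t - h s))) = 0.
    by rewrite sumrN harm // oppr0.
  have /psumr_eq0P H1 := H0.
  have : - (q s t * (h t - h s)) = 0.
    apply: H1 => // t' Vt'; rewrite -mulrN; apply: mulr_ge0; first exact: q0.
    by rewrite oppr_ge0 subr_le0 Hm.
  move/eqP; rewrite oppr_eq0 mulf_eq0 gt_eqF //= subr_eq0 => /eqP //.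
have [s0 Vs0 Hmax] := @arg_maxP _ _ S o valid h Vo.
have Hmax' s : valid s -> h s = h s0 -> forall t, valid t -> h t <= h s.
  by move=> _ hs t Vt; rewrite hs; exact: Hmax.
have step1 N : forall s, (pot s < N)%N -> valid s -> h s = h s0 -> h o = h s0.
  elim: N => [//|N IH] s ltN Vs hs.
  have [/eqP E|neo] := boolP (s == o); first by rewrite -E.
  have [t [Vt lt qp]] := down s Vs neo.
  apply: (IH t); [exact: leq_trans lt ltN| done|].
  by rewrite (closure s) // ; exact: Hmax'.
have step2 N : forall t, (pot t < N)%N -> valid t -> h t = h s0.
  elim: N => [//|N IH] t ltN Vt.
  have [/eqP -> |neo] := boolP (t == o).
    exact: (step1 (pot s0).+1 s0).
  have [t' [Vt' lt qp]] := down t Vt neo.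
  have ht' : h t' = h s0 by apply: IH => //; exact: leq_trans lt ltN.
  have qp' : 0 < q t' t.
    have := DB t t' Vt Vt'.
    move=> E; have : 0 < wt t' * q t' t by rewrite -E mulr_gt0 ?wt0.
    by rewrite pmulr_rgt0 ?wt0.
  by rewrite (closure t') // ; exact: Hmax'.
have hc t : valid t -> h t = h s0 by move=> Vt; exact: (step2 (pot t).+1).
have sw : 0 < \sum_(t | valid t) wt t.
  rewrite (bigD1 o) //=; have := wt0 o Vo.
  have : 0 <= \sum_(i | valid i && (i != o)) wt i.
    by apply: sumr_ge0 => i /andP [Vi _]; apply/ltW/wt0.
  lra.
have E1 : h s0 * \sum_(t | valid t) wt t = 1.
  rewrite -Hsum mulr_sumr; apply: eq_bigr => t Vt.
  by rewrite piE // hc.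
move=> s Vs; rewrite piE // hc //.
congr (_ * _).
have -> : h s0 = h s0 * (\sum_(t | valid t) wt t) / (\sum_(t | valid t) wt t) by rewrite mulfK // gt_eqF.
by rewrite E1 mul1r.
Qed.
End Uniq.

Section Poly.
Variable R : realType.

Definition tpoly (m : nat) (a : R) : {poly R} := \poly_(c < m.+1) (a ^+ c / (c`!)%:R).

Lemma fact_neq0 n : (n`!)%:R != 0 :> R.
Proof. by rewrite pnatr_eq0 -lt0n fact_gt0. Qed.

Lemma coef_prod_tpoly m k : forall (r : 'I_k -> R) N, (N <= m)%N ->
  (\prod_(i < k) tpoly m (r i))`_N = (\sum_(i < k) r i) ^+ N / (N`!)%:R.
Proof.
elim: k => [|k IH] r N Nm.
  rewrite !big_ord0 coef1; case: N Nm => [|N] _ /=; first by rewrite expr0 fact0 divr1.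
  by rewrite expr0n /= mul0r.
rewrite big_ord_recr big_ord_recr /= coefM.
set a := \sum_(i < k) r (widen_ord (leqnSn k) i).
set b := r ord_max.
rewrite addrC exprDn mulr_suml; apply: eq_bigr => i _.
have iN : (i <= N)%N by rewrite -ltnS ltn_ord.
rewrite IH; last by apply: leq_trans iN Nm.
rewrite -/a.
rewrite /tpoly coef_poly ifT; last by rewrite ltnS (leq_trans (leq_subr _ _)).
have F : (N`!)%:R = ('C(N, i))%:R * (i`!)%:R * ((N - i)`!)%:R :> R.
  by rewrite -!natrM -mulnA bin_fact.
rewrite F -mulr_natr.
have C0 : ('C(N, i))%:R != 0 :> R by rewrite pnatr_eq0 -lt0n bin_gt0.
have := fact_neq0 i; have := fact_neq0 (N - i) => H1 H2.
by field; rewrite ?C0 ?H1 ?H2.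
Qed.

Lemma multinom m k (r : 'I_k -> R) N : (N <= m)%N ->
  \sum_(y : {ffun 'I_k -> 'I_m.+1} | (\sum_(i < k) val (y i) == N)%N)
     \prod_(i < k) (r i ^+ val (y i) / ((val (y i))`!)%:R)
  = (\sum_(i < k) r i) ^+ N / (N`!)%:R.
Proof.
move=> Nm; rewrite -(coef_prod_tpoly m k r N Nm).
have -> : \prod_(i < k) tpoly m (r i) =
   \sum_(y : {ffun 'I_k -> 'I_m.+1})
      (\prod_(i < k) (r i ^+ val (y i) / ((val (y i))`!)%:R)) *: 'X^(\sum_(i < k) val (y i)).
  rewrite /tpoly (eq_bigr (fun i => \sum_(c < m.+1) (r i ^+ c / (c`!)%:R) *: 'X^c)); last first.
    by move=> i _; rewrite poly_def.
  rewrite bigA_distr_bigA; apply: eq_bigr => y _.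
  rewrite -prodrXr -!mul_polyC rmorph_prod -big_split /=.
  by apply: eq_bigr => i _; rewrite mul_polyC.
by rewrite coef_sumMXn.
Qed.
End Poly.

Section Model2.
Variable R : realType.
Variables (m k n : nat).
Variables (lam mu : 'I_k -> R) (alpha beta u v : 'I_n -> R) (theta : nat -> R).
Hypothesis lam0 : forall i, 0 < lam i.
Hypothesis mu0 : forall i, 0 < mu i.
Hypothesis alpha0 : forall j, 0 < alpha j.
Hypothesis beta0 : forall j, 0 < beta j.
Hypothesis u0 : forall j, 0 < u j.
Hypothesis v0 : forall j, 0 < v j.
Hypothesis th01 : forall b, (b <= m)%N -> 0 <= theta b <= 1.
Hypothesis thpos : forall b, (b < m)%N -> 0 < theta b.

Notation tr := (trans_rate R n alpha beta u v theta).
Notation tp := (theta_prod R theta).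
Notation pw := (pers_weight R n alpha beta u v).
Notation wt := (weight R m k n lam mu alpha beta u v theta).
Notation NS := (nsum m k).
Notation BZ := (busy m k n).
Notation rt := (rate R m k n lam mu alpha beta u v theta).

Definition gj (j : 'I_n) (x : act) : R :=
  (alpha j / beta j) ^+ (x == Wait) * (alpha j * u j / (beta j * v j)) ^+ (x == Trans).

Lemma tpS b : tp b.+1 = tp b * theta b.
Proof. by rewrite /theta_prod big_ord_recr. Qed.

Lemma pers_step j x y b G0 :
  tp (b + (x == Trans)) * (gj j x * G0) * tr j x y (b + (x == Trans)) =
  tp (b + (y == Trans)) * (gj j y * G0) * tr j y x (b + (y == Trans)).
Proof.
have b0 := beta0 j; have v0' := v0 j.
have bn : beta j != 0 by rewrite gt_eqF.
have vn : v j != 0 by rewrite gt_eqF.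
rewrite /gj; case: x; case: y => /=; rewrite ?addn0 ?addn1 ?tpS ?expr0 ?expr1 ?mul1r ?mulr1 ?mulr0 ?mul0r //;
  by field; rewrite ?bn ?vn.
Qed.

Lemma busy_split (a : {ffun 'I_n -> act}) j :
  busy_p a = ((a j == Trans) + \sum_(l < n | l != j) (a l == Trans))%N.
Proof. by rewrite /busy_p (bigD1 j). Qed.

Lemma pers_split (a : {ffun 'I_n -> act}) j :
  pw a = gj j (a j) * \prod_(l < n | l != j) gj l (a l).
Proof. by rewrite /pers_weight (bigD1 j). Qed.

Lemma pers_db (a a' : {ffun 'I_n -> act}) j c :
  (forall l, l != j -> a' l = a l) ->
  tp (c + busy_p a) * pw a * tr j (a j) (a' j) (c + busy_p a) =
  tp (c + busy_p a') * pw a' * tr j (a' j) (a j) (c + busy_p a').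
Proof.
move=> H.
rewrite (busy_split a j) (busy_split a' j) (pers_split a j) (pers_split a' j).
have -> : (\sum_(l < n | l != j) (a' l == Trans))%N = (\sum_(l < n | l != j) (a l == Trans))%N.
  by apply: eq_bigr => l /H ->.
have -> : \prod_(l < n | l != j) gj l (a' l) = \prod_(l < n | l != j) gj l (a l).
  by apply: eq_bigr => l /H ->.
set B0 := (\sum_(l < n | l != j) _)%N.
have E (x : nat) : (c + (x + B0) = c + B0 + x)%N by lia.
rewrite !E.
exact: pers_step.
Qed.


Definition fx (y : {ffun 'I_k -> 'I_m.+1}) : R :=
  \prod_(i < k) (rho R k lam mu i ^+ val (y i) / ((val (y i))`!)%:R).

Lemma wtE (w : state m k n) : wt w = tp (NS w.1 + busy_p w.2) * fx w.1 * pw w.2.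
Proof. by []. Qed.

Lemma UD (s t : state m k n) i :
  wt s * (([forall l, val (t.1 l) == (val (s.1 l) + (l == i))%N] && (t.2 == s.2))%:R
           * (lam i * theta (BZ s))) =
  wt t * (([forall l, val (t.1 l) == (val (s.1 l) + (l == i))%N] && (s.2 == t.2))%:R
           * ((val (t.1 i))%:R * mu i)).
Proof.
rewrite [s.2 == t.2]eq_sym.
have [/andP [/forallP H /eqP E2]|_] := boolP (_ && _); last by rewrite !mul0r !mulr0.
have H' l : val (t.1 l) = (val (s.1 l) + (l == i))%N by apply/eqP.
have Ns : NS t.1 = (NS s.1).+1.
  rewrite /nsum (bigD1 i) //= [in RHS](bigD1 i) //= H' eqxx addn1 addSn; congr (_.+1 + _)%N.
  by apply: eq_bigr => l /negbTE li; rewrite H' li addn0.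
have Fx : fx t.1 = (rho R k lam mu i ^+ (val (s.1 i)).+1 / (((val (s.1 i)).+1)`!)%:R) *
    \prod_(l < k | l != i) (rho R k lam mu l ^+ val (s.1 l) / ((val (s.1 l))`!)%:R).
  rewrite /fx (bigD1 i) //= H' eqxx addn1; congr (_ * _).
  by apply: eq_bigr => l /negbTE li; rewrite H' li addn0.
rewrite !wtE Fx Ns E2 /fx (bigD1 i) //=.
rewrite /busy H' eqxx addn1.
rewrite addSn tpS.
set Q := \prod_(l < k | l != i) _.
set x := val (s.1 i). change (nat_of_ord (s.1 i)) with x.
rewrite factS natrM exprS /rho.
have mn : mu i != 0 by rewrite gt_eqF.
have f0 : (x`!)%:R != 0 :> R by rewrite pnatr_eq0 -lt0n fact_gt0.
have x0 : (x.+1)%:R != 0 :> R by rewrite pnatr_eq0.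
have x1 : 1 + x%:R != 0 :> R by rewrite addrC natr1 pnatr_eq0.
field. all: try (rewrite ?mn ?f0 ?x0 ?x1 //).
Qed.

Lemma Yj (s t : state m k n) j :
  wt s * (((t.1 == s.1) && [forall l, (l != j) ==> (t.2 l == s.2 l)])%:R
          * tr j (s.2 j) (t.2 j) (BZ s)) =
  wt t * (((s.1 == t.1) && [forall l, (l != j) ==> (s.2 l == t.2 l)])%:R
          * tr j (t.2 j) (s.2 j) (BZ t)).
Proof.
have -> : ((s.1 == t.1) && [forall l, (l != j) ==> (s.2 l == t.2 l)]) =
          ((t.1 == s.1) && [forall l, (l != j) ==> (t.2 l == s.2 l)]).
  rewrite [s.1 == t.1]eq_sym; congr (_ && _); apply: eq_forallb => l; by rewrite [s.2 l == _]eq_sym.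
have [/andP [/eqP E1 /forallP H]|_] := boolP (_ && _); last by rewrite !mul0r !mulr0.
have H' l : l != j -> t.2 l = s.2 l by move=> lj; have := H l; rewrite lj => /eqP.
have := pers_db s.2 t.2 j (NS s.1) H'.
rewrite !wtE /busy E1 !mul1r => E.
transitivity (fx s.1 * (tp (NS s.1 + busy_p s.2) * pw s.2 * tr j (s.2 j) (t.2 j) (NS s.1 + busy_p s.2))).
  by ring.
by rewrite E; ring.
Qed.

Lemma rate_db (s t : state m k n) : wt s * rt s t = wt t * rt t s.
Proof.
rewrite /rate !mulrDr !mulr_sumr; congr (_ + _).
  rewrite !(eq_bigr _ (fun i _ => mulrDr _ _ _)) !big_split /= addrC; congr (_ + _).
    by apply: eq_bigr => i _; rewrite UD.
  by apply: eq_bigr => i _; rewrite UD.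
by apply: eq_bigr => j _; rewrite Yj.
Qed.

Lemma tr_ge0 j x y b : (b <= m)%N -> 0 <= tr j x y b.
Proof.
move=> bm; have /andP [t0 _] := th01 _ bm.
case: x; case: y => /=; rewrite ?lexx //; try exact: ltW; apply: mulr_ge0 => //; exact: ltW.
Qed.

Lemma rate_ge0 (s t : state m k n) : valid m k n s -> 0 <= rt s t.
Proof.
rewrite /valid => bm; have /andP [t0 _] := th01 _ bm.
rewrite /rate; apply: addr_ge0; apply: sumr_ge0 => i _.
  apply: addr_ge0; apply: mulr_ge0 => //; apply: mulr_ge0 => //; exact: ltW.
by apply: mulr_ge0 => //; apply: tr_ge0.
Qed.

Lemma tp_gt0 b : (b <= m)%N -> 0 < tp b.
Proof.
move=> bm; apply: prodr_gt0 => r _; apply: thpos; exact: leq_trans (ltn_ord r) bm.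
Qed.

Lemma pw_gt0 a : 0 < pw a.
Proof.
apply: prodr_gt0 => j _; apply: mulr_gt0; apply: exprn_gt0.
  by apply: divr_gt0.
by apply: divr_gt0; apply: mulr_gt0.
Qed.

Lemma wt_gt0 (s : state m k n) : valid m k n s -> 0 < wt s.
Proof.
move=> Vs; rewrite wtE; apply: mulr_gt0; last exact: pw_gt0.
apply: mulr_gt0; first exact: tp_gt0.
apply: prodr_gt0 => i _; apply: divr_gt0; last by rewrite ltr0n fact_gt0.
by apply: exprn_gt0; apply: divr_gt0.
Qed.

Definition lower (x : act) : act := match x with Trans => Wait | _ => Idle end.
Definition code (x : act) : nat := match x with Idle => 0 | Wait => 1 | Trans => 2 end%N.
Definition lowerj (a : {ffun 'I_n -> act}) (j : 'I_n) : {ffun 'I_n -> act} :=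
  [ffun l => if l == j then lower (a j) else a l].
Definition ppot (a : {ffun 'I_n -> act}) : nat := (\sum_(j < n) code (a j))%N.
Definition pot (w : state m k n) : nat := (NS w.1 + ppot w.2)%N.

Lemma lower_props {a : {ffun 'I_n -> act}} {j : 'I_n} : a j != Idle ->
  [/\ forall l, l != j -> lowerj a j l = a l, (busy_p (lowerj a j) <= busy_p a)%N,
      (ppot (lowerj a j) < ppot a)%N & forall b, 0 < tr j (a j) (lowerj a j j) b].
Proof.
move=> aj.
have Hl l : l != j -> lowerj a j l = a l by move=> /negbTE lj; rewrite ffunE lj.
have Hj : lowerj a j j = lower (a j) by rewrite ffunE eqxx.
split => //.
- rewrite (busy_split (lowerj a j) j) (busy_split a j) Hj.
  rewrite (eq_bigr (fun l => nat_of_bool (a l == Trans))); last by move=> l /Hl ->.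
  by rewrite leq_add2r; case: (a j).
- rewrite /ppot (bigD1 j) //= [X in (_ < X)%N](bigD1 j) //= Hj.
  rewrite (eq_bigr (fun l => code (a l))); last by move=> l /Hl ->.
  by rewrite ltn_add2r; move: aj; case: (a j).
- move=> b; rewrite Hj; move: aj; case: (a j) => //= _; by [apply: beta0 | apply: v0].
Qed.

Lemma pos4 (a b c d : R) : 0 <= a -> 0 < b -> 0 <= c -> 0 <= d -> 0 < a + b + c + d.
Proof. by move=> *; lra. Qed.
Lemma pos3 (a b c : R) : 0 <= a -> 0 < b -> 0 <= c -> 0 < a + (b + c).
Proof. by move=> *; lra. Qed.

Definition o_full : state m k n := ([ffun => ord0], [ffun => Idle]).

Lemma down_full (s : state m k n) : valid m k n s -> s != o_full ->
  exists t, [/\ valid m k n t, (pot t < pot s)%N & 0 < rt s t].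
Proof.
move=> Vs neo.
have Vs' := Vs; rewrite /valid /busy in Vs'.
have /andP [t0 _] := th01 _ Vs'.
have U0 (t : state m k n) i : 0 <= (([forall l, val (t.1 l) == (val (s.1 l) + (l == i))%N] && (t.2 == s.2))%:R
          * (lam i * theta (BZ s))).
  by apply: mulr_ge0 => //; apply: mulr_ge0 => //; apply: ltW.
have D0 (t : state m k n) i : 0 <= (([forall l, val (s.1 l) == (val (t.1 l) + (l == i))%N] && (t.2 == s.2))%:R
          * ((val (s.1 i))%:R * mu i)).
  by apply: mulr_ge0 => //; apply: mulr_ge0 => //; apply: ltW.
have Y0 (t : state m k n) j : 0 <= (((t.1 == s.1) && [forall l, (l != j) ==> (t.2 l == s.2 l)])%:R
          * tr j (s.2 j) (t.2 j) (BZ s)).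
  by apply: mulr_ge0 => //; apply: tr_ge0.
have [/existsP [i si]|/existsPn H1] := boolP [exists i, (0 < val (s.1 i))%N].
  pose t : state m k n := ([ffun l => inord (val (s.1 l) - (l == i)) : 'I_m.+1], s.2).
  have ht l : val (t.1 l) = (val (s.1 l) - (l == i))%N.
    by rewrite /t /= ffunE inordK // ltnS (leq_trans (leq_subr _ _)) // -ltnS.
  have Ns : NS s.1 = (NS t.1).+1.
    have E l : val (s.1 l) = (val (t.1 l) + (l == i))%N.
      rewrite ht; case: eqP => [->|_]; last by rewrite subn0 addn0.
      by rewrite subn1 addn1 prednK.
    transitivity (NS t.1 + 1)%N; last by rewrite addn1.
    rewrite /nsum (eq_bigr _ (fun l _ => E l)) big_split /=; congr (_ + _)%N.
    by rewrite (bigD1 i) //= eqxx big1 // => l /negbTE ->.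
  exists t; split.
  - rewrite /valid /busy (_ : t.2 = s.2) //; move: Vs'; rewrite Ns; lia.
  - by rewrite /pot (_ : t.2 = s.2) // Ns.
  - rewrite /rate (bigD1 i) //; apply: pos4 => //.
    + have -> : ([forall l, val (s.1 l) == (val (t.1 l) + (l == i))%N] && (t.2 == s.2)) = true.
        rewrite eqxx andbT; apply/forallP => l; rewrite ht.
        case: (eqVneq l i) => [->|_] /=; last by rewrite subn0 addn0.
        by rewrite subn1 addn1 prednK.
      by rewrite mul1r; apply: mulr_gt0 => //; rewrite ltr0n.
    + by apply: sumr_ge0 => l _; apply: addr_ge0; [exact: U0 | exact: D0].
    + by apply: sumr_ge0 => j _; exact: Y0.
have [/existsP [j aj]|/existsPn H2] := boolP [exists j, s.2 j != Idle].
  have [Hl Hb Hp Htr] := lower_props aj.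
  pose t : state m k n := (s.1, lowerj s.2 j).
  exists t; split.
  - by rewrite /valid /busy /=; apply: leq_trans Vs'; rewrite leq_add2l.
  - by rewrite /pot /= ltn_add2l.
  - rewrite /rate [X in _ + X](bigD1 j) //; apply: pos3.
    + by apply: sumr_ge0 => l _; apply: addr_ge0; [exact: U0 | exact: D0].
    + have -> : ((t.1 == s.1) && [forall l, (l != j) ==> (t.2 l == s.2 l)]) = true.
        by rewrite eqxx /=; apply/forallP => l; apply/implyP => /Hl ->.
      by rewrite mul1r; apply: Htr.
    + by apply: sumr_ge0 => l _; exact: Y0.
exfalso; move/negP: neo; apply; apply/eqP.
case: s {Vs Vs' t0 U0 D0 Y0} H1 H2 => y a H1 H2 /=; rewrite /o_full; congr (_, _).
  apply/ffunP => i; rewrite ffunE; apply/val_inj => /=.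
  by move: (H1 i); rewrite lt0n negbK => /eqP.
by apply/ffunP => j; rewrite ffunE; move: (H2 j); rewrite negbK => /eqP.
Qed.

Notation prt := (prate R n alpha beta u v theta).
Notation pwt := (pweight R n alpha beta u v theta).

Lemma prate_ge0 (a a' : pstate n) : pvalid m n a -> 0 <= prt a a'.
Proof.
move=> Va; apply: sumr_ge0 => j _; apply: mulr_ge0 => //; exact: tr_ge0.
Qed.

Lemma pwt_gt0 (a : pstate n) : pvalid m n a -> 0 < pwt a.
Proof. by move=> Va; apply: mulr_gt0; [exact: tp_gt0 | exact: pw_gt0]. Qed.

Lemma prate_db (a a' : pstate n) : pwt a * prt a a' = pwt a' * prt a' a.
Proof.
rewrite /prate !mulr_sumr; apply: eq_bigr => j _.
have -> : [forall l, (l != j) ==> (a l == a' l)] = [forall l, (l != j) ==> (a' l == a l)].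
  by apply: eq_forallb => l; rewrite [a l == _]eq_sym.
have [/forallP H|_] := boolP [forall l, (l != j) ==> (a' l == a l)]; last by rewrite !mul0r !mulr0.
have H' l : l != j -> a' l = a l by move=> lj; have := H l; rewrite lj => /eqP.
have := pers_db a a' j 0 H'; rewrite !add0n /pweight !mul1r => E.
exact: E.
Qed.

Lemma down_p (a : pstate n) : pvalid m n a -> a != [ffun => Idle] ->
  exists a', [/\ pvalid m n a', (ppot a' < ppot a)%N & 0 < prt a a'].
Proof.
move=> Va neo.
have [/existsP [j aj]|/existsPn H2] := boolP [exists j, a j != Idle].
  have [Hl Hb Hp Htr] := lower_props aj.
  exists (lowerj a j); split => //.
  - exact: leq_trans Hb Va.
  - rewrite /prate (bigD1 j) //=.
    have -> : [forall l, (l != j) ==> (lowerj a j l == a l)] = true.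
      by apply/forallP => l; apply/implyP => /Hl ->.
    rewrite mul1r; apply: ltr_pwDl; first exact: Htr.
    by apply: sumr_ge0 => l _; apply: mulr_ge0 => //; apply: tr_ge0.
exfalso; move/negP: neo; apply; apply/eqP.
by apply/ffunP => j; rewrite ffunE; move: (H2 j); rewrite negbK => /eqP.
Qed.

Hypothesis thm : theta m = 0.

Lemma full_main (pi : state m k n -> R) :
  stationary R m k n lam mu alpha beta u v theta pi ->
  forall (x : nat) (a : {ffun 'I_n -> act}), (x + busy_p a <= m)%N ->
    marginal R m k n pi x a =
      normB R m k n lam mu alpha beta u v theta * tp (x + busy_p a) * pw a
      * (rho_sum R k lam mu ^+ x / (x`!)%:R).
Proof.
case=> p0 pv psum pbal x a Hx.
have Vo : valid m k n o_full.
  rewrite /valid /busy /nsum /busy_p /= big1 => [|i _]; last by rewrite ffunE.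
  by rewrite big1 // => j _; rewrite ffunE.
have piE := @stat_unique R _ (valid m k n) rt wt pot o_full pi Vo
  (fun s t Vs _ => rate_ge0 s t Vs) (fun s Vs => wt_gt0 s Vs) (fun s t _ _ => rate_db s t)
  down_full psum pbal.
set C := normB R m k n lam mu alpha beta u v theta.
rewrite /marginal (eq_bigr (fun w => C * wt w)); last first.
  by move=> w /andP [/andP [Vw _] _]; rewrite piE.
transitivity (\sum_(y | NS y == x) C * wt (y, a)).
  rewrite big_mkcond /=.
  rewrite -(pair_bigA _ (fun y b => if valid m k n (y, b) && (NS y == x) && (b == a)
                                    then C * wt (y, b) else 0)) /=.
  rewrite [RHS]big_mkcond; apply: eq_bigr => y _.
  rewrite (bigD1 a) //= big1 => [|b /negbTE nb]; last by rewrite nb andbF.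
  rewrite addr0 eqxx andbT.
  have [Ey|_] := eqVneq (NS y) x; last by rewrite andbF.
  by rewrite andbT /valid /busy /= Ey Hx.
transitivity (\sum_(y | NS y == x) (C * tp (x + busy_p a) * pw a) * fx y).
  by apply: eq_bigr => y /eqP Ey; rewrite wtE /= Ey; ring.
rewrite -mulr_sumr /fx /nsum multinom //.
exact: leq_trans (leq_addr _ _) Hx.
Qed.

Lemma p_main (pi : pstate n -> R) :
  pstationary R m n alpha beta u v theta pi ->
  forall a : pstate n, pvalid m n a ->
    pi a = pnormB R m n alpha beta u v theta * tp (busy_p a) * pw a.
Proof.
case=> p0 pv psum pbal a Va.
have Vo : pvalid m n [ffun => Idle].
  by rewrite /pvalid /busy_p big1 // => j _; rewrite ffunE.
have piE := @stat_unique R _ (pvalid m n) prt pwt ppot [ffun => Idle] pi Vo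
  (fun s t Vs _ => prate_ge0 s t Vs) (fun s Vs => pwt_gt0 s Vs) (fun s t _ _ => prate_db s t)
  down_p psum pbal.
by rewrite piE // /pnormB /pweight mulrA.
Qed.

End Model2.


Theorem corollary2 (R : realType) (m k n : nat)
  (lam mu : 'I_k -> R) (alpha beta u v : 'I_n -> R) (theta : nat -> R) :
  (1 <= m)%N -> (1 <= k)%N -> (1 <= n)%N ->
  (forall i, 0 < lam i) -> (forall i, 0 < mu i) ->
  (forall j, 0 < alpha j) -> (forall j, 0 < beta j) ->
  (forall j, 0 < u j) -> (forall j, 0 < v j) ->
  (forall b, (b <= m)%N -> 0 <= theta b <= 1) ->
  (forall b, (b < m)%N -> 0 < theta b) ->
  theta m = 0 ->
  (forall pi : state m k n -> R,
     stationary R m k n lam mu alpha beta u v theta pi ->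
     forall (x : nat) (a : {ffun 'I_n -> act}), (x + busy_p a <= m)%N ->
       marginal R m k n pi x a =
         normB R m k n lam mu alpha beta u v theta
         * theta_prod R theta (x + busy_p a)
         * pers_weight R n alpha beta u v a
         * (rho_sum R k lam mu ^+ x / (x`!)%:R))
  /\
  (forall pi : pstate n -> R,
     pstationary R m n alpha beta u v theta pi ->
     forall a : pstate n, pvalid m n a ->
       pi a = pnormB R m n alpha beta u v theta
              * theta_prod R theta (busy_p a) * pers_weight R n alpha beta u v a).
Proof.
move=> _ _ _ lam0 mu0 al0 be0 u0 v0 th01 thpos thm.
split.
- move=> pi; apply: full_main => //.
- move=> pi; apply: p_main => //.
Qed.
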